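(* Let $\sigma=(a_1,\ldots,a_s)$ be a partition of $r$ and let $H=H(n,r,q\mid\sigma)$ with $n\ge s$ and $q\ge r$. Suppose $d=\gcd(a_1,\ldots,a_s)\ge2$ and $q\equiv t\pmod d$ with $1\le t\le d-1$. Then every maximum matching of $H$ leaves at least $tn$ vertices unmatched. Hence $\nu(H)\le\frac{n(q-t)}{r}$.
   Context: A $\sigma$-hypergraph $H=H(n,r,q\mid\sigma)$, for a partition $\sigma=(a_1,\ldots,a_s)$ of $r$ with $s$ parts, is the $r$-uniform hypergraph whose vertex set is the disjoint union of $n$ classes $V_1,\ldots,V_n$, each of size $q$; an $r$-subset $K$ of vertices is an edge iff the multiset of non-zero values $|K\cap V_i|$ equals $\sigma$. A matching is a set of pairwise vertex-disjoint edges; $\nu(H)$ is the maximum size of a matching. *)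

(* Defs.v *)
From mathcomp Require Import all_boot.
Set Implicit Arguments. Unset Strict Implicit. Unset Printing Implicit Defensive.

(* Vertices of H(n,r,q|sigma): pairs (i, j) with i : 'I_n the class index
   and j : 'I_q the position inside class V_i. *)
Definition vertex (n q : nat) := ('I_n * 'I_q)%type.

Definition class_part (n q : nat) (K : {set vertex n q}) (i : 'I_n) :
  {set vertex n q} := [set v in K | v.1 == i].

(* sigma is a partition of r: positive parts summing to r (the order of
   the parts is irrelevant, since edges compare multisets). *)
Definition is_partition (r : nat) (sigma : seq nat) : bool :=
  all (fun a => 0 < a) sigma && (sumn sigma == r).

Definition gcd_seq (sigma : seq nat) : nat := foldr gcdn 0 sigma.

Definition is_edge (n r q : nat) (sigma : seq nat) (K : {set vertex n q}) : bool :=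
  (#|K| == r) &&
  perm_eq [seq #|class_part K i| | i <- enum 'I_n & 0 < #|class_part K i|] sigma.

Definition is_matching (n r q : nat) (sigma : seq nat)
  (M : {set {set vertex n q}}) : bool :=
  [forall K in M, is_edge r sigma K] && trivIset M.

Definition is_max_matching (n r q : nat) (sigma : seq nat)
  (M : {set {set vertex n q}}) : Prop :=
  is_matching r sigma M /\
  forall M' : {set {set vertex n q}}, is_matching r sigma M' -> #|M'| <= #|M|.

Definition nu (n r q : nat) (sigma : seq nat) : nat :=
  \max_(M : {set {set vertex n q}} | is_matching r sigma M) #|M|.

Definition unmatched (n q : nat) (M : {set {set vertex n q}}) : nat :=
  #|~: cover M|.

(* Main.v *)
Require Import Defs.
From mathcomp Require Import all_boot.
From mathcomp Require Import zify.

Lemma gcd_seq_dvd (s : seq nat) a : a \in s -> gcd_seq s %| a.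
Proof.
elim: s => [//|x s IH]; rewrite inE => /orP [/eqP ->|Ha] /=.
  exact: dvdn_gcdl.
exact: dvdn_trans (dvdn_gcdr _ _) (IH Ha).
Qed.

Lemma edge_part_dvd n r q sigma (K : {set vertex n q}) i :
  is_edge r sigma K -> gcd_seq sigma %| #|class_part K i|.
Proof.
case/andP=> _ Hp.
have [H0|Hpos] := posnP #|class_part K i|; first by rewrite H0 dvdn0.
apply: gcd_seq_dvd; rewrite -(perm_mem Hp).
apply/mapP; exists i => //; rewrite mem_filter Hpos mem_enum //.
Qed.

Lemma class_le_q n q (C : {set vertex n q}) i : #|class_part C i| <= q.
Proof.
rewrite -(card_in_imset (f := fun v : vertex n q => v.2)).
  by apply: leq_trans (max_card _) _; rewrite card_ord.
move=> [a b] [c d]; rewrite !inE /= => /andP[_ /eqP ->] /andP[_ /eqP ->] -> //.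
Qed.

Lemma cover_parts n r q sigma (M : {set {set vertex n q}}) i :
  is_matching r sigma M -> gcd_seq sigma %| #|class_part (cover M) i|.
Proof.
case/andP=> /forallP HE Htriv.
have -> : #|class_part (cover M) i| = \sum_(K in M) #|class_part K i|.
  rewrite -sum1_card.
  have -> : \sum_(v in class_part (cover M) i) 1 =
            \sum_(v in cover M) (v.1 == i : nat).
    rewrite big_mkcond [RHS]big_mkcond; apply: eq_bigr => v _.
    by rewrite inE; case: (v \in cover M); case: (v.1 == i).
  rewrite (big_trivIset _ Htriv); apply: eq_bigr => K _.
  rewrite -sum1_card big_mkcond [RHS]big_mkcond; apply: eq_bigr => v _.
  by rewrite inE; case: (v \in K); case: (v.1 == i).
apply: dvdn_sum => K HK; apply: edge_part_dvd; exact: (implyP (HE K) HK).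
Qed.

Lemma cover_card n r q sigma (M : {set {set vertex n q}}) :
  is_matching r sigma M -> #|cover M| = #|M| * r.
Proof.
case/andP=> /forallP HE Htriv.
rewrite -sum1_card (big_trivIset _ Htriv) -sum_nat_const.
apply: eq_bigr => K HK; rewrite sum1_card.
by case/andP: (implyP (HE K) HK) => /eqP.
Qed.

Lemma cover_bound n r q t sigma (M : {set {set vertex n q}}) :
  is_matching r sigma M -> q = t %[mod gcd_seq sigma] ->
  t < gcd_seq sigma -> #|cover M| <= n * (q - t).
Proof.
move=> HM Hq Ht.
set d := gcd_seq sigma in Hq Ht.
have Hqd : q %% d = t by rewrite Hq modn_small.
have Hdec : q = q %/ d * d + t by rewrite {1}(divn_eq q d) Hqd.
have Hd : 0 < d by case: (d) Ht.
have Hcls : forall i, #|class_part (cover M) i| <= q - t.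
  move=> i; have := @cover_parts _ _ _ _ M i HM; rewrite -/d => /dvdnP [k Hk].
  have Hle := @class_le_q n q (cover M) i.
  have : k <= q %/ d by rewrite leq_divRL // -Hk.
  move=> Hkq; have := leq_mul Hkq (leqnn d).
  rewrite -Hk => H; apply: leq_trans H _.
  by rewrite {2}Hdec addnK.
have -> : #|cover M| = \sum_(i < n) #|class_part (cover M) i|.
  rewrite -sum1_card (partition_big (fun v : vertex n q => v.1) xpredT) //=.
  apply: eq_bigr => i _; rewrite -sum1_card big_mkcond [RHS]big_mkcond.
  by apply: eq_bigr => v _; rewrite inE; case: (v \in cover M).
apply: (@leq_trans (\sum_(i < n) (q - t))).
  by apply: leq_sum => i _; apply: Hcls.
by rewrite sum_nat_const card_ord.
Qed.

Theorem lemma3p4 (n r q t : nat) (sigma : seq nat) :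
  is_partition r sigma ->
  size sigma <= n ->
  r <= q ->
  2 <= gcd_seq sigma ->
  q = t %[mod gcd_seq sigma] ->
  1 <= t <= gcd_seq sigma - 1 ->
  (forall M : {set {set vertex n q}},
      is_max_matching r sigma M -> t * n <= unmatched M) /\
  nu n r q sigma * r <= n * (q - t).
Proof.
move=> _ _ _ Hd2 Hq /andP[_ Ht].
have Htd : t < gcd_seq sigma by lia.
split.
  move=> M [HM _]; rewrite /unmatched.
  have Hb := @cover_bound n r q t sigma M HM Hq Htd.
  have := cardC (mem (cover M)).
  rewrite card_prod !card_ord => Hc.
  have -> : #|~: cover M| = #|[predC cover M]|.
    by apply: eq_card => v; rewrite !inE.
  have Htq : t <= q.
    by rewrite -(modn_small Htd) -Hq leq_mod.
  move: Hc Hb; set a := #|_|; set b := #|_|; move=> Hc Hb.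
  have : n * (q - t) + n * t = n * q by rewrite -mulnDr subnK.
  lia.
rewrite /nu; apply: (big_ind (fun x => x * r <= n * (q - t))) => //.
  by move=> x y Hx Hy; rewrite maxnMl geq_max Hx Hy.
move=> M HM; rewrite -(@cover_card n r q sigma M HM); exact: @cover_bound n r q t sigma M HM Hq Htd.
Qed.
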